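(* Consider the variation of the temporal graph discovery game in which the Discoverer does not learn the static edge set (only the node set). Let $n,T_{\max}\in\mathbb N^+$, $k\in[n]$, $m\in[\binom n2-n]$ and $\delta\in[T_{\max}]$. Then there is an Adversary such that any algorithm winning this game variation on graphs with $n$ nodes and $m$ edges must take at least $\lfloor nT_{\max}/(2\delta k)\rfloor$ rounds. Moreover, this Adversary picks a graph with at most two $\delta$-edge connected components.
   Context: A temporal graph $\mathcal G=(V,E,\lambda)$ with lifetime $T_{\max}$ consists of a finite undirected static graph $(V,E)$ and a labeling $\lambda:E\to\{1,\dots,T_{\max}\}$; edge $e$ is present only at time $\lambda(e)$. $[x]=\{1,\dots,x\}$. Infection model with parameter $\delta$: a set $S\subseteq V\times[0,T_{\max}]$ of at most $k$ seed infections is given; a seed $(u,t)$ makes $u$ infected at time $t$; otherwise a susceptible node $u$ becomes infected at time $t$ iff some neighbour $v$ infectious at time $t$ has $\lambda(uv)=t$ (exactly one infector recorded if several exist). A node infected at time $t$ is infectious at times $t+1,\dots,t+\delta$ and resistant afterwards. The infection log records triples $(u,v,t)$ ($u$ infected $v$ at time $t$). Game (unknown static graph variant): the Discoverer knows only $V$; each round it submits at most $k$ seeds and the Adversary answers with an infection log consistent with the seeds under some temporal graph on $V$ consistent with all previous answers (adaptive). The Discoverer wins iff the temporal graph (edges and labels) it finally submits equals the Adversary's final temporal graph consistent with all logs. $\delta$-edge connected components: relate two edges sharing an endpoint whose labels differ by at most $\delta$; the classes of the transitive closure are the $\delta$-edge connected components. *)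

(* Defs.v *)
From mathcomp Require Import all_boot.
Set Implicit Arguments. Unset Strict Implicit. Unset Printing Implicit Defensive.

(* Temporal graph on V = 'I_n with lifetime Tmax, encoded as a finite
   function w on ordered pairs: w (u,v) = 0 means "no edge uv", otherwise
   w (u,v) = lambda(uv) in [1,Tmax]. *)
Definition tgraph (n : nat) := {ffun 'I_n * 'I_n -> nat}.

Definition valid_tgraph n (Tmax : nat) (w : tgraph n) : Prop :=
  (forall u v, w (u, v) = w (v, u)) /\
  (forall u, w (u, u) = 0) /\
  (forall u v, w (u, v) <= Tmax).

Definition edges n (w : tgraph n) : {set 'I_n * 'I_n} :=
  [set p : 'I_n * 'I_n | (p.1 < p.2) && (0 < w p)].

(* a round's query: a set of seed infections (u,t), t in [0,Tmax] *)
Definition seeds n Tmax := {set 'I_n * 'I_Tmax.+1}.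
(* an infection log: triples (u,v,t) = "u infected v at time t" *)
Definition tlog n Tmax := {set 'I_n * 'I_n * 'I_Tmax.+1}.

Section Infection.
Variables (n Tmax delta : nat) (S : seeds n Tmax) (w : tgraph n).

Definition seeded (u : 'I_n) (t : nat) : Prop :=
  exists i : 'I_Tmax.+1, (u, i) \in S /\ nat_of_ord i = t.

Definition infectious (tau : 'I_n -> option nat) (v : 'I_n) (t : nat) : Prop :=
  exists s, tau v = Some s /\ s < t <= s + delta.

Definition triggered (tau : 'I_n -> option nat) (u : 'I_n) (t : nat) : Prop :=
  seeded u t \/
  exists v, infectious tau v t /\ 0 < t /\ w (v, u) = t.

(* tau u = infection time of u (None = never infected): a node gets infected
   at the first time it is triggered while still susceptible *)
Definition infection_times (tau : 'I_n -> option nat) : Prop :=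
  forall u t, tau u = Some t <->
    (triggered tau u t /\ forall t', t' < t -> ~ triggered tau u t').

Definition log_consistent (L : tlog n Tmax) : Prop :=
  exists tau, infection_times tau /\
   (forall u v (i : 'I_Tmax.+1), (u, v, i) \in L ->
      [/\ tau v = Some (nat_of_ord i), ~ seeded v i,
          infectious tau u i & w (u, v) = i]) /\
   (forall u u' v (i i' : 'I_Tmax.+1),
      (u, v, i) \in L -> (u', v, i') \in L -> u = u') /\
   (forall v t, tau v = Some t -> ~ seeded v t ->
      exists u (i : 'I_Tmax.+1), nat_of_ord i = t /\ (u, v, i) \in L).
End Infection.

Definition ecc_rel n (delta : nat) (w : tgraph n) : rel ('I_n * 'I_n) :=
  fun p q => [&& p \in edges w, q \in edges w,
                 [|| p.1 == q.1, p.1 == q.2, p.2 == q.1 | p.2 == q.2],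
                 w p - w q <= delta & w q - w p <= delta].

Definition num_dECC n (delta : nat) (w : tgraph n) : nat :=
  #|[set [set q | connect (ecc_rel delta w) p q] | p in edges w]|.

Definition adversary n Tmax :=
  seq (seeds n Tmax * tlog n Tmax) -> seeds n Tmax -> tlog n Tmax.

Fixpoint play n Tmax (adv : adversary n Tmax)
    (hist : seq (seeds n Tmax * tlog n Tmax)) (qs : seq (seeds n Tmax)) :=
  match qs with
  | [::] => hist
  | q :: qs' => play adv (rcons hist (q, adv hist q)) qs'
  end.

Definition hist_consistent n Tmax delta
    (H : seq (seeds n Tmax * tlog n Tmax)) (w : tgraph n) : Prop :=
  forall q L, (q, L) \in H -> log_consistent delta q w L.

Definition adv_graph n Tmax m delta (w : tgraph n) : Prop :=
  [/\ valid_tgraph Tmax w, #|edges w| = m & num_dECC delta w <= 2].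

(* Main.v *)
Require Import Defs.
From mathcomp Require Import all_boot.
From Stdlib Require Import Classical ClassicalEpsilon.
From mathcomp Require Import zify.
Set Implicit Arguments. Unset Strict Implicit. Unset Printing Implicit Defensive.

Section Sim.
Variables (n Tmax delta : nat) (S : seeds n Tmax) (w : tgraph n).
Hypothesis wle : forall u v, w (u,v) <= Tmax.

Lemma trig_local (tau1 tau2 : 'I_n -> option nat) u t :
  (forall v s, s < t -> (tau1 v = Some s <-> tau2 v = Some s)) ->
  triggered delta S w tau1 u t -> triggered delta S w tau2 u t.
Proof.
move=> H [hs|[v [[s [h1 h2]] h3]]]; [by left|right].
exists v; split=> //; exists s; split=> //; apply/H=> //.
by case/andP: h2.
Qed.

Fixpoint tauN (t : nat) : 'I_n -> option nat :=
  match t with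
  | 0 => fun _ => None
  | t'.+1 => fun u => match tauN t' u with
                      | Some s => Some s
                      | None => if excluded_middle_informative
                                     (triggered delta S w (tauN t') u t')
                                then Some t' else None
                      end
  end.

Lemma tauN_lt t u s : tauN t u = Some s -> s < t.
Proof.
elim: t s => [|t IH] s //=.
case E: (tauN t u) => [s0|].
  by case=> <-; apply: leq_trans (IH _ E) _.
by case: excluded_middle_informative => // _ [<-].
Qed.

Lemma tauN_mono t t' u s : t <= t' -> tauN t u = Some s -> tauN t' u = Some s.
Proof.
move=> le; elim: t' le => [|t' IH]; first by rewrite leqn0 => /eqP ->.
rewrite leq_eqVlt => /orP [/eqP <- //|]; rewrite ltnS => le H.
by rewrite /= (IH le H).
Qed.

Lemma tauN_down t t' u s : s < t' -> t' <= t -> tauN t u = Some s -> tauN t' u = Some s.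
Proof.
elim: t => [|t IH]; first by move=> st; rewrite leqn0 => /eqP E; rewrite E in st.
move=> st; rewrite leq_eqVlt => /orP [/eqP -> //|]; rewrite ltnS => le /=.
case E: (tauN t u) => [s0|]; first by case=> E0; subst s0; exact: IH st le E.
case: excluded_middle_informative => // _ [E2].
by move: st; rewrite -E2 => st; have := leq_trans st le; rewrite ltnn.
Qed.

Lemma tauN_agree t t' u s : s < t -> s < t' ->
  (tauN t u = Some s <-> tauN t' u = Some s).
Proof.
move=> h1 h2; split=> H.
  by apply: (@tauN_mono s.+1) => //; apply: (@tauN_down t).
by apply: (@tauN_mono s.+1) => //; apply: (@tauN_down t').
Qed.

Lemma tauN_new s u : tauN s.+1 u = Some s ->
  tauN s u = None /\ triggered delta S w (tauN s) u s.
Proof.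
rewrite /=; case E: (tauN s u) => [s0|].
  by case=> E2; have := tauN_lt E; rewrite E2 ltnn.
by case: excluded_middle_informative.
Qed.

Lemma tauN_None t t' u : t' <= t -> tauN t u = None -> tauN t' u = None.
Proof.
move=> le E; case E2: (tauN t' u) => [s|] //.
by rewrite (tauN_mono le E2) in E.
Qed.

Lemma trig_bound tau u t : triggered delta S w tau u t -> t <= Tmax.
Proof.
case=> [[i [_ <-]]|[v [_ [_ <-]]]]; last exact: wle.
by rewrite -ltnS ltn_ord.
Qed.

Definition tauF := tauN Tmax.+1.

Lemma infection_ok : infection_times delta S w tauF.
Proof.
move=> u t; split.
- move=> Ht; have tM := tauN_lt Ht.
  have H1 : tauN t.+1 u = Some t by exact: (@tauN_agree Tmax.+1 t.+1 u t tM (ltnSn t)).1 Ht.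
  case: (tauN_new H1) => Hn Htr; split.
    apply: trig_local Htr => v s st; apply: tauN_agree => //.
    exact: ltn_trans st tM.
  move=> t' lt Htr'.
  have Htr2 : triggered delta S w (tauN t') u t'.
    apply: trig_local Htr' => v s st; apply: tauN_agree => //.
    exact: ltn_trans st (ltn_trans lt tM).
  have Hn' : tauN t' u = None by apply: (tauN_None (ltnW lt)).
  have H2 : tauN t'.+1 u = Some t'.
    by rewrite /= Hn'; case: excluded_middle_informative.
  have : tauN Tmax.+1 u = Some t' by exact: (@tauN_agree t'.+1 Tmax.+1 u t' (ltnSn t') (ltn_trans lt tM)).1 H2.
  by rewrite /tauF in Ht; rewrite Ht => -[E]; rewrite E ltnn in lt.
- move=> [Htr Hno]; have tT := trig_bound Htr.
  case E: (tauN t u) => [s|].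
    have st := tauN_lt E.
    have H1 : tauN s.+1 u = Some s by exact: (@tauN_agree t s.+1 u s st (ltnSn s)).1 E.
    case: (tauN_new H1) => _ Htr2; exfalso; apply: (Hno s st).
    apply: trig_local Htr2 => v s' s's; apply: tauN_agree => //.
    lia.
  have H2 : tauN t.+1 u = Some t.
    rewrite /= E; case: excluded_middle_informative => // [[]].
    apply: trig_local Htr => v s st; apply: tauN_agree => //.
    lia.
  have tM : t < Tmax.+1 by rewrite ltnS.
  exact: (@tauN_agree t.+1 Tmax.+1 u t (ltnSn t) tM).1 H2.
Qed.

Definition seededb (v : 'I_n) (t : nat) :=
  [exists i : 'I_Tmax.+1, ((v, i) \in S) && (val i == t)].

Lemma seededP v t : reflect (seeded S v t) (seededb v t).
Proof.
apply: (iffP existsP) => [[i /andP [h /eqP e]]|[i [h e]]]; exists i.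
  by split.
by rewrite h -e eqxx.
Qed.

Lemma sim_exists : exists L, log_consistent delta S w L.
Proof.
have hf : forall v, exists u : 'I_n, forall t, tauF v = Some t ->
    ~ seeded S v t -> infectious delta tauF u t /\ w (u, v) = t.
  move=> v; case E: (tauF v) => [t|]; last by exists v.
  case: (classic (seeded S v t)) => hs; first by exists v => t' [<-] /(_ hs).
  have [Htr _] := (infection_ok v t).1 E.
  case: Htr => [hs'|[u [hi [_ hw]]]]; first by exfalso; exact: hs hs'.
  by exists u => t' [<-] _.
case: (fin_all_exists hf) => f hfP.
pose L := [set x : 'I_n * 'I_n * 'I_Tmax.+1 | [&& x.1.1 == f x.1.2,
            tauF x.1.2 == Some (val x.2) & ~~ seededb x.1.2 x.2]].
exists L, tauF; split; first exact: infection_ok.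
split; [|split].
- move=> u v i; rewrite inE /= => /and3P [/eqP -> /eqP Ht Hs].
  have Hs' : ~ seeded S v i by move/seededP; apply/negP.
  by have [hi hw] := hfP v i Ht Hs'; split.
- move=> u u' v i i'; rewrite !inE /=.
  by move=> /and3P [/eqP -> _ _] /and3P [/eqP -> _ _].
- move=> v t Ht Hs; have [hi hw] := hfP v t Ht Hs.
  have tT : t <= Tmax by rewrite -hw wle.
  exists (f v), (inord t); rewrite inordK ?ltnS //; split=> //.
  rewrite inE /= eqxx Ht inordK ?ltnS // eqxx /=.
  by apply/negP => /seededP.
Qed.

End Sim.

Lemma succ_val n (i : 'I_n) :
  (val (ordS i) = i.+1 /\ i.+1 < n) \/ (val (ordS i) = 0 /\ i.+1 = n).
Proof.
rewrite /ordS /=; have := ltn_ord i; rewrite leq_eqVlt => /orP [/eqP E|lt].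
  by right; rewrite E modnn.
by left; rewrite modn_small.
Qed.

Section Graph.
Variables (n Tmax delta : nat).
Hypothesis n3 : 3 <= n.
Hypothesis Tpos : 0 < Tmax.

Local Notation succ := (@ordS n).

Lemma succ_neq (i : 'I_n) : succ i != i.
Proof.
apply/eqP => /(congr1 val) H.
case: (succ_val i) => [[E _]|[E E']]; simpl in *; lia.
Qed.

Lemma succ2_neq (i : 'I_n) : succ (succ i) != i.
Proof.
apply/eqP => /(congr1 val) H.
case: (succ_val (succ i)) => [[E _]|[E E']]; case: (succ_val i) => [[E1 _]|[E1 E2]];
  simpl in *; lia.
Qed.

Variable X : {set 'I_n * 'I_n}.
Hypothesis HXs : forall p, p \in X -> p.1 < p.2.
Hypothesis HXc : forall p, p \in X -> p.2 != succ p.1 /\ p.1 != succ p.2.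
Hypothesis HXg : forall p, p \in X -> val p.1 = 0 \/
   exists q, [/\ q \in X, val q.1 = 0 & (q.2 = p.1 \/ q.2 = p.2)].

Definition Bg : tgraph n :=
  [ffun p => if (p \in X) || ((p.2, p.1) \in X) then Tmax else 0].

Definition epair (i : 'I_n) (p : 'I_n * 'I_n) :=
  (p == (i, succ i)) || (p == (succ i, i)).

Definition Fam (pos : 'I_n * 'I_Tmax) : tgraph n :=
  [ffun p => if epair pos.1 p then (val pos.2).+1 else Bg p].

Lemma Bg_le u v : Bg (u, v) <= Tmax.
Proof. by rewrite ffunE; case: ifP. Qed.

Lemma Bg_val p : Bg p = 0 \/ Bg p = Tmax.
Proof. by rewrite ffunE; case: ifP; [right|left]. Qed.

Lemma epair_notX i p : epair i p -> (p \in X = false) /\ ((p.2, p.1) \in X = false).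
Proof.
case/orP => /eqP -> /=; split; apply/negbTE/negP => /HXc /= [h1 h2];
  by rewrite eqxx in h1 h2.
Qed.

Lemma Bg_epair i p : epair i p -> Bg p = 0.
Proof. by move/epair_notX => [h1 h2]; rewrite ffunE h1 h2. Qed.

Lemma epair_sym i u v : epair i (u, v) = epair i (v, u).
Proof. by rewrite /epair !xpair_eqE; case: (u == i); case: (v == i); case: (u == succ i); case: (v == succ i). Qed.

Lemma epair_fst i p : epair i p -> p.1 = i \/ p.1 = succ i.
Proof. by case/orP => /eqP ->; [left|right]. Qed.

Lemma Fam_valid pos : valid_tgraph Tmax (Fam pos).
Proof.
split; [|split].
- move=> u v; rewrite !ffunE epair_sym /=; case: ifP => // _; by rewrite orbC.
- move=> u; rewrite !ffunE /=; case: ifP.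
    case/orP => /eqP [] -> E; move: (succ_neq pos.1).
      by rewrite -E eqxx.
    by rewrite E eqxx.
  move=> _; case: ifP => //; rewrite orbb => /HXs /=; by rewrite ltnn.
- move=> u v; rewrite ffunE; case: ifP => _; [exact: ltn_ord | exact: Bg_le].
Qed.

Definition esort (i : 'I_n) : 'I_n * 'I_n :=
  if i < succ i then (i, succ i) else (succ i, i).

Lemma esort_epair i : epair i (esort i).
Proof. by rewrite /esort /epair; case: ifP; rewrite eqxx ?orbT. Qed.

Lemma sort_helper (a b : 'I_n) : a != b ->
  ((a < b) = ((a, b) == (if a < b then (a, b) else (b, a)))) /\
  ((b < a) = ((b, a) == (if a < b then (a, b) else (b, a)))).
Proof.
move=> ab; case: (ltngtP a b) => h.
- split; first by rewrite eqxx.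
  by apply/esym/negbTE; rewrite xpair_eqE negb_and eq_sym ab.
- split; last by rewrite eqxx.
  by apply/esym/negbTE; rewrite xpair_eqE negb_and ab.
- by move: ab; rewrite -(inj_eq val_inj) /= h eqxx.
Qed.

Lemma epair_sorted i p : epair i p -> (p.1 < p.2) = (p == esort i).
Proof.
have ab : i != succ i by rewrite eq_sym succ_neq.
have [h1 h2] := sort_helper ab.
by rewrite /esort; case/orP => /eqP ->; [exact: h1 | exact: h2].
Qed.

Lemma esort_notX i : esort i \notin X.
Proof. by have [h _] := epair_notX (esort_epair i); rewrite h. Qed.

Lemma edges_Fam pos : edges (Fam pos) = esort pos.1 |: X.
Proof.
apply/setP => p; rewrite !inE ffunE.
case: ifP => he.
  rewrite (epair_sorted he) /= andbT.
  by have [h1 _] := epair_notX he; rewrite h1 orbF.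
have -> : (p == esort pos.1) = false.
  by apply/negbTE/negP => /eqP E; move: he; rewrite E esort_epair.
rewrite /= ffunE; case: ifP => hX.
  case/orP: hX => h.
    by rewrite h (HXs h) Tpos.
  have := HXs h; rewrite /= => lt; rewrite ltnNge (ltnW lt) /=.
  by apply/esym/negbTE/negP => /HXs; rewrite ltnNge (ltnW lt).
by rewrite andbF; move/negbT: hX; rewrite negb_or => /andP [/negbTE -> _].
Qed.

Lemma card_edges_Fam pos : #|edges (Fam pos)| = #|X|.+1.
Proof. by rewrite edges_Fam cardsU1 esort_notX. Qed.

Lemma Fam_X pos p : p \in X -> Fam pos p = Tmax.
Proof.
move=> pX; rewrite ffunE; case: ifP => he.
  by have [h _] := epair_notX he; rewrite h in pX.
by rewrite ffunE pX.
Qed.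

Lemma rX pos p q : p \in X -> q \in X ->
  [|| p.1 == q.1, p.1 == q.2, p.2 == q.1 | p.2 == q.2] ->
  ecc_rel delta (Fam pos) p q.
Proof.
move=> pX qX h; rewrite /ecc_rel edges_Fam !inE pX qX !orbT h /=.
by rewrite !Fam_X // subnn.
Qed.

Lemma hub pos p : p \in X -> exists h, [/\ h \in X, val h.1 = 0,
   connect (ecc_rel delta (Fam pos)) p h & connect (ecc_rel delta (Fam pos)) h p].
Proof.
move=> pX; case: (HXg pX) => [h0|[q [qX q0 qp]]].
  by exists p; split => //; exact: connect0.
exists q; split => //; apply: connect1; apply: rX => //;
  case: qp => ->; rewrite !eqxx ?orbT //.
Qed.

Lemma X_connect pos p q : p \in X -> q \in X -> connect (ecc_rel delta (Fam pos)) p q.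
Proof.
move=> pX qX.
have [h1 [h1X h10 c1 _]] := hub pos pX.
have [h2 [h2X h20 _ c2]] := hub pos qX.
apply: connect_trans c1 _; apply: connect_trans _ c2; apply: connect1.
apply: rX => //; have -> : h1.1 = h2.1 by apply: val_inj; rewrite h10 h20.
by rewrite eqxx.
Qed.

Lemma dECC_Fam pos : num_dECC delta (Fam pos) <= 2.
Proof.
rewrite /num_dECC.
set cls := fun p => [set q | connect (ecc_rel delta (Fam pos)) p q].
rewrite edges_Fam imsetU1 cardsU1.
have : #|cls @: X| <= 1.
  apply/card_le1_eqP => c1 c2 /imsetP [p1 p1X ->] /imsetP [p2 p2X ->].
  apply/setP => q; rewrite !inE; apply/idP/idP => h.
    exact: connect_trans (X_connect pos p1X p2X) h.
  exact: connect_trans (X_connect pos p2X p1X) h.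
move=> h; case: (_ \notin _) => /=.
  by rewrite add1n ltnS.
by rewrite add0n (leq_trans h).
Qed.

Lemma Fam_adv m pos : #|X| = m.-1 -> 0 < m -> adv_graph Tmax m delta (Fam pos).
Proof.
move=> cX m0; split; [exact: Fam_valid| |exact: dECC_Fam].
by rewrite card_edges_Fam cX; lia.
Qed.

Lemma Fam_inj p1 p2 : Fam p1 = Fam p2 -> p1 = p2.
Proof.
case: p1 p2 => [i1 j1] [i2 j2] E.
have h1 : epair i1 (i1, succ i1) by rewrite /epair eqxx.
have := congr1 (fun f : tgraph n => f (i1, succ i1)) E; rewrite !ffunE /= h1.
case: ifP => h2; last by have := Bg_epair h1; rewrite ffunE => ->.
case=> ej.
case/orP: h2; rewrite xpair_eqE => /andP [/eqP e1 /eqP e2].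
  by subst i2; congr pair; apply: val_inj.
exfalso; move: (succ2_neq i2); rewrite -e1 e2 eqxx //.
Qed.

Definition hit (pos : 'I_n * 'I_Tmax) (sd : 'I_n * 'I_Tmax.+1) : bool :=
  ((sd.1 == pos.1) || (sd.1 == succ pos.1)) && (sd.2 <= pos.2 < sd.2 + delta).

Definition safe (S : seeds n Tmax) pos := [forall sd in S, ~~ hit pos sd].

Lemma extend S L pos : log_consistent delta S Bg L -> safe S pos ->
  log_consistent delta S (Fam pos) L.
Proof.
case=> tau [Hinf [H1 [H2 H3]]] Hs.
have noinf : forall x, (x = pos.1 \/ x = succ pos.1) ->
    ~ infectious delta tau x (val pos.2).+1.
  move=> x hx [s [ts /andP [lt1 lt2]]].
  have [Htr _] := (Hinf x s).1 ts.
  case: Htr => [[i [iS ei]]|[v [_ [s0 hw]]]].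
    move/forallP: Hs => /(_ (x, i)); rewrite iS /= /hit /= ei.
    have -> : (x == pos.1) || (x == succ pos.1) by case: hx => ->; rewrite eqxx ?orbT.
    by rewrite -ltnS lt1 lt2.
  have := ltn_ord pos.2.
  by case: (Bg_val (v, x)) => hb; rewrite hb in hw; simpl in *; lia.
have trig_eq : forall u t, triggered delta S (Fam pos) tau u t <->
                           triggered delta S Bg tau u t.
  move=> u t; split; case=> [hs|[v [hi [t0 hw]]]]; try by left.
    right; exists v; split => //; split => //.
    move: hw; rewrite ffunE; case: ifP => he hw //.
    exfalso; apply: (noinf v); first by have := epair_fst he.
    by rewrite hw.
  right; exists v; split => //; split => //.
  rewrite ffunE; case: ifP => he //.
  by rewrite (Bg_epair he) in hw; lia.
exists tau; split; [|split; [|split]] => //.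
- move=> u t; split.
    move/(Hinf u t).1 => [h1 h2]; split; first by apply/trig_eq.
    by move=> t' lt /trig_eq; exact: h2 t' lt.
  move=> [h1 h2]; apply/(Hinf u t).2; split; first by apply/trig_eq.
  by move=> t' lt /trig_eq; exact: h2 t' lt.
- move=> u v i hL; have [a b c d] := H1 u v i hL; split => //.
  rewrite ffunE; case: ifP => he //.
  rewrite (Bg_epair he) in d.
  by case: c => [s [_ /andP [lt _]]]; lia.
Qed.

Definition killed (qs : seq (seeds n Tmax)) :=
  [set pos | ~~ all (fun S => safe S pos) qs].

Lemma card_killed1 (S : seeds n Tmax) :
  #|[set pos | ~~ safe S pos]| <= #|S| * delta * 2.
Proof.
pose j0 : 'I_Tmax := Ordinal Tpos.
pose f (x : (('I_n * 'I_Tmax.+1) * 'I_delta) * bool) : 'I_n * 'I_Tmax :=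
  (if x.2 then x.1.1.1 else ord_pred x.1.1.1, insubd j0 (x.1.1.2 + x.1.2)).
have sub : [set pos | ~~ safe S pos] \subset f @: setX (setX S setT) setT.
  apply/subsetP => pos; rewrite inE /safe negb_forall_in => /existsP [sd /andP [sdS /negPn h]].
  move: h; rewrite /hit => /andP [h1 /andP [h2 h3]].
  have dlt : pos.2 - sd.2 < delta by simpl in *; lia.
  apply/imsetP; exists ((sd, Ordinal dlt), sd.1 == pos.1).
    by rewrite !inE sdS.
  rewrite /f /=; case: pos h1 h2 h3 dlt => p1 p2 /= h1 h2 h3 dlt.
  congr pair.
    case: ifP => [/eqP -> //|hb]; move: h1; rewrite hb /= => /eqP ->.
    by rewrite ordSK.
  by apply/val_inj; rewrite val_insubd /= subnKC // ltn_ord.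
apply: leq_trans (subset_leq_card sub) _.
apply: leq_trans (leq_imset_card _ _) _.
by rewrite !cardsX !cardsT card_ord card_bool.
Qed.

Lemma card_killed (qs : seq (seeds n Tmax)) k :
  all (fun S : seeds n Tmax => #|S| <= k) qs ->
  #|killed qs| <= size qs * (k * delta * 2).
Proof.
elim: qs => [|S qs IH] /=.
  move=> _; rewrite leqn0 cards_eq0; apply/eqP/setP => pos; by rewrite !inE.
move=> /andP [hS hall].
have -> : killed (S :: qs) = [set pos | ~~ safe S pos] :|: killed qs.
  by apply/setP => pos; rewrite !inE /= negb_and.
rewrite cardsU; apply: leq_trans (leq_subr _ _) _.
have h1 := card_killed1 S.
have h2 := IH hall.
have h3 : #|S| * delta * 2 <= k * delta * 2 by rewrite !leq_mul2r hS !orbT.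
rewrite mulSn; apply: leq_add => //; exact: leq_trans h1 h3.
Qed.

Lemma two_safe (qs : seq (seeds n Tmax)) k :
  all (fun S : seeds n Tmax => #|S| <= k) qs -> 0 < k -> 0 < delta ->
  size qs < (n * Tmax) %/ (2 * delta * k) ->
  exists p1 p2, [/\ p1 != p2, all (fun S => safe S p1) qs & all (fun S => safe S p2) qs].
Proof.
move=> hall k0 d0 hs.
have hk := card_killed hall.
have c0 : 0 < 2 * delta * k by rewrite !muln_gt0 k0 d0.
move: hs; rewrite leq_divRL // => hs.
have hC := cardsC (killed qs).
have : 1 < #|~: killed qs|.
  rewrite card_prod !card_ord in hC.
  nia.
case/card_gt1P => [x [y [hx hy xy]]].
exists x, y; split => //.
  by move: hx; rewrite !inE negbK.
by move: hy; rewrite !inE negbK.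
Qed.

Definition LB (S : seeds n Tmax) : tlog n Tmax :=
  proj1_sig (constructive_indefinite_description _ (@sim_exists n Tmax delta S Bg Bg_le)).

Lemma LB_ok S : log_consistent delta S Bg (LB S).
Proof. exact: (proj2_sig (constructive_indefinite_description _ _)). Qed.

Variable m : nat.
Hypothesis cX : #|X| = m.-1.
Hypothesis m0 : 0 < m.

Definition adv : adversary n Tmax := fun hist S =>
  if excluded_middle_informative (exists pos, hist_consistent delta hist (Fam pos) /\
                                   log_consistent delta S (Fam pos) (LB S))
  then LB S
  else match excluded_middle_informative (exists L, exists w,
          adv_graph Tmax m delta w /\ hist_consistent delta hist w /\
          log_consistent delta S w L) with
       | left h => proj1_sig (constructive_indefinite_description _ h)
       | right _ => set0
       end.

Lemma hc_rcons (H : seq (seeds n Tmax * tlog n Tmax)) (S : seeds n Tmax) (L : tlog n Tmax) (w : tgraph n) : hist_consistent delta H w ->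
  log_consistent delta S w L -> hist_consistent delta (rcons H (S, L)) w.
Proof.
move=> h1 h2 q L'; rewrite mem_rcons inE => /orP [/eqP [-> ->] //|].
exact: h1.
Qed.

Lemma adv_step (H : seq (seeds n Tmax * tlog n Tmax)) (S : seeds n Tmax) :
  (exists w, adv_graph Tmax m delta w /\ hist_consistent delta H w) ->
  exists w, adv_graph Tmax m delta w /\
            hist_consistent delta (rcons H (S, adv H S)) w.
Proof.
move=> [w [hw hH]]; rewrite /adv.
destruct (excluded_middle_informative _) as [[pos [h1 h2]]|hno].
  by exists (Fam pos); split; [exact: Fam_adv | exact: hc_rcons].
destruct (excluded_middle_informative _) as [h|hn].
  case: (proj2_sig (constructive_indefinite_description _ h)) => w' [a [b c]].
  by exists w'; split => //; exact: hc_rcons.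
exfalso; apply: hn.
have [[_ [_ wle]] _ _] := hw.
have [L hL] := @sim_exists _ _ delta S w wle.
by exists L, w; split; [|split].
Qed.

Lemma part1 (qs : seq (seeds n Tmax)) (H : seq (seeds n Tmax * tlog n Tmax)) :
  (exists w, adv_graph Tmax m delta w /\ hist_consistent delta H w) ->
  exists w, adv_graph Tmax m delta w /\ hist_consistent delta (play adv H qs) w.
Proof.
elim: qs H => [|q qs IH] H h //=.
by apply: IH; exact: adv_step.
Qed.

Lemma hist_B (l : seq (seeds n Tmax)) pos : all (fun S => safe S pos) l ->
  hist_consistent delta [seq (SS, LB SS) | SS <- l] (Fam pos).
Proof.
move=> hall q L /mapP [S0 hS [-> ->]].
by apply: extend; [exact: LB_ok | exact: (allP hall S0 hS)].
Qed.

Lemma play_B (qs ps : seq (seeds n Tmax)) pos : all (fun S => safe S pos) (ps ++ qs) ->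
  play adv [seq (SS, LB SS) | SS <- ps] qs = [seq (SS, LB SS) | SS <- ps ++ qs].
Proof.
elim: qs ps => [|q qs IH] ps hall /=; first by rewrite cats0.
have -> : adv [seq (SS, LB SS) | SS <- ps] q = LB q.
  rewrite /adv; destruct (excluded_middle_informative _) as [|hn] => //.
  exfalso; apply: hn.
  exists pos; split.
    by apply: hist_B; move: hall; rewrite all_cat => /andP [].
  apply: extend (LB_ok q) _.
  by move: hall; rewrite all_cat /= => /and3P [].
rewrite -map_rcons -cat_rcons; apply: IH.
by rewrite cat_rcons.
Qed.

End Graph.

Section Xex.
Variable n : nat.
Hypothesis n4 : 3 < n.

Definition Avail := [set p : 'I_n * 'I_n | [&& p.1 < p.2, p.2 != ordS p.1,
   p.1 != ordS p.2 & ~~ ((val p.1 == 1) && (val p.2 == n.-1))]].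

Definition goodX (X : {set 'I_n * 'I_n}) := forall p, p \in X -> val p.1 = 0 \/
   exists q, [/\ q \in X, val q.1 = 0 & (q.2 = p.1 \/ q.2 = p.2)].

Lemma succ_mod (i : 'I_n) :
  (i.+1 %% n = i.+1 /\ i.+1 < n) \/ (i.+1 %% n = 0 /\ i.+1 = n).
Proof. exact: (succ_val i). Qed.

Lemma neq_val (a b : 'I_n) : a != b -> val a <> val b.
Proof. by move=> h E; move: h; rewrite -val_eqE E eqxx. Qed.

Lemma X_exists j : j <= #|Avail| ->
  exists X : {set 'I_n * 'I_n}, [/\ X \subset Avail, #|X| = j & goodX X].
Proof.
elim: j => [_|j IH hj].
  by exists set0; split; [exact: sub0set | exact: cards0 | move=> p; rewrite inE].
have [X [XA cX gX]] := IH (ltnW hj).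
have hD : 0 < #|Avail :\: X| by rewrite cardsDS // cX subn_gt0.
have addg : forall p, p \in Avail :\: X -> (val p.1 = 0 \/
    exists q, [/\ q \in X, val q.1 = 0 & (q.2 = p.1 \/ q.2 = p.2)]) ->
    exists X' : {set 'I_n * 'I_n}, [/\ X' \subset Avail, #|X'| = j.+1 & goodX X'].
  move=> p; rewrite inE => /andP [pX pA] hp; exists (p |: X); split.
  - by rewrite subUset sub1set pA XA.
  - by rewrite cardsU1 pX cX.
  - move=> p'; rewrite in_setU1 => /orP [/eqP ->|p'X].
      case: hp => [h|[q [qX h1 h2]]]; [by left | right; exists q; split => //].
      by rewrite in_setU1 qX orbT.
    case: (gX p' p'X) => [h|[q [qX h1 h2]]]; [by left | right; exists q; split => //].
    by rewrite in_setU1 qX orbT.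
case: (pickP [pred p | (p \in Avail :\: X) && (val p.1 == 0)]) => [p /andP [pD /eqP p0]|none].
  by apply: (addg p pD); left.
case/card_gt0P: hD => p pD.
have pD' := pD; move: pD'; rewrite !inE => /andP [pX /and4P [p12 p2s p1s pb]].
have p10 : val p.1 <> 0.
  by move=> E; have := none p; rewrite /= pD E eqxx.
have n0 : 0 < n by lia.
pose o0 : 'I_n := Ordinal n0.
pose y := if 2 <= p.1 then p.1 else p.2.
have hy : (2 <= y) /\ (y.+1 < n).
  have l2 := ltn_ord p.2.
  have hs1 := neq_val p2s.
  have pb' : ~ (val p.1 = 1 /\ val p.2 = n.-1).
    by move=> [e1 e2]; move: pb; rewrite e1 e2 !eqxx.
  have hs1' : val p.1 = 1 -> val p.2 <> 2.
    move=> e1 e2; case: (succ_val p.1) => [[E1 E2]|[E1 E2]]; rewrite E1 in hs1;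
    simpl in *; lia.
  rewrite /y; case: ifP => h2; simpl in *; lia.
have qA : (o0, y) \in Avail.
  rewrite inE /=; case: hy => hy1 hy2.
  apply/and4P; split.
  - by apply: leq_trans hy1.
  - rewrite -val_eqE; case: (succ_val o0) => [[-> _]|[-> _]] /=; lia.
  - apply/eqP => /(congr1 val) E; have := succ_mod y; simpl in *; lia.
  - by [].
have qX : (o0, y) \in X.
  have := none (o0, y); rewrite /= eqxx andbT in_setD qA andbT.
  by move/negbFE.
apply: (addg p pD); right; exists (o0, y); split => //.
by rewrite /y; case: ifP => _; [left|right].
Qed.

Lemma card_P : 'C(n, 2) <= #|[set p : 'I_n * 'I_n | p.1 < p.2]|.
Proof.
rewrite -card_ltn_sorted_tuples.
have sub : [set t : 2.-tuple 'I_n | sorted ltn (map val t)] \subset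
           [set [tuple p.1; p.2] | p in [set p : 'I_n * 'I_n | p.1 < p.2]].
  apply/subsetP => t; rewrite inE.
  case/tupleP: t => a t; case/tupleP: t => b t; rewrite tuple0 /= andbT => ab.
  apply/imsetP; exists (a, b); first by rewrite inE.
  by apply: val_inj.
apply: leq_trans (subset_leq_card sub) _.
exact: leq_imset_card.
Qed.

Definition esort2 (i : 'I_n) : 'I_n * 'I_n :=
  if i < ordS i then (i, ordS i) else (ordS i, i).

Lemma card_Avail : 'C(n, 2) - n - 1 <= #|Avail|.
Proof.
pose P := [set p : 'I_n * 'I_n | p.1 < p.2].
pose B1 := [set p : 'I_n * 'I_n | (val p.1 == 1) && (val p.2 == n.-1)].
have hB1 : #|B1| <= 1.
  apply/card_le1_eqP => x y; rewrite !inE => /andP [/eqP x1 /eqP x2] /andP [/eqP y1 /eqP y2].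
  case: x y x1 x2 y1 y2 => [a b] [c d] /= x1 x2 y1 y2.
  by congr pair; apply: val_inj => /=; lia.
have sub : P \subset Avail :|: ((esort2 @: setT) :|: B1).
  apply/subsetP => p; rewrite !inE => p12.
  rewrite p12 /=.
  case e1: (p.2 == ordS p.1) => /=.
    apply/orP; left; apply/imsetP; exists p.1 => //.
    by rewrite /esort2 -(eqP e1) p12; case: p p12 e1.
  case e2: (p.1 == ordS p.2) => /=.
    apply/orP; left; apply/imsetP; exists p.2 => //.
    rewrite /esort2 -(eqP e2) ltnNge (ltnW p12) /=; by case: p p12 e1 e2.
  by case: ((val p.1 == 1) && (val p.2 == n.-1)); rewrite ?orbT.
have := subset_leq_card sub.
have h1 := card_P; rewrite -/P in h1.
have h2 : #|esort2 @: setT| <= n by apply: leq_trans (leq_imset_card _ _) _; rewrite cardsT card_ord.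
have h3 := cardsU Avail (esort2 @: setT :|: B1).
have h4 := cardsU (esort2 @: setT) B1.
lia.
Qed.

End Xex.

Lemma n_ge4 n : 0 < 'C(n, 2) - n -> 3 < n.
Proof. by case: n => [|[|[|[|n]]]]. Qed.

Unset Implicit Arguments.
Set Strict Implicit.

Theorem mainTheorem13 (n Tmax k m delta : nat) :
  0 < n -> 0 < Tmax -> 1 <= k <= n -> 1 <= m <= 'C(n, 2) - n ->
  1 <= delta <= Tmax ->
  exists adv : adversary n Tmax,
    forall qs : seq (seeds n Tmax),
      all (fun S : seeds n Tmax => #|S| <= k) qs ->
      (exists w, adv_graph Tmax m delta w /\
                 hist_consistent delta (play adv [::] qs) w) /\
      (size qs < (n * Tmax) %/ (2 * delta * k) ->
       exists w1 w2 : tgraph n, w1 <> w2 /\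
         adv_graph Tmax m delta w1 /\ adv_graph Tmax m delta w2 /\
         hist_consistent delta (play adv [::] qs) w1 /\
         hist_consistent delta (play adv [::] qs) w2).
Proof.
move=> n0 T0 /andP [k1 kn] /andP [m1 mC] /andP [d1 dT].
have n4 : 3 < n by apply: n_ge4; lia.
have n3 : 2 < n by lia.
have hj : m.-1 <= #|Avail n| by have := card_Avail n4; lia.
have [X [XA cX gX]] := X_exists n4 hj.
have HXs : forall p, p \in X -> p.1 < p.2.
  by move=> p /(subsetP XA); rewrite inE => /and4P [].
have HXc : forall p, p \in X -> p.2 != ordS p.1 /\ p.1 != ordS p.2.
  by move=> p /(subsetP XA); rewrite inE => /and4P [].
have m0 : 0 < m by lia.
exists (adv delta X m) => qs hall; split.
  apply: (part1 n3 T0 HXs HXc gX cX m0).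
  exists (Fam X (Ordinal n0, Ordinal T0)); split.
    exact: (Fam_adv delta n3 T0 HXs HXc gX).
  by move=> q L; rewrite in_nil.
move=> hs.
have [p1 [p2 [ne s1 s2]]] := two_safe n3 T0 hall k1 d1 hs.
have E := @play_B n Tmax delta n3 T0 X HXc m qs [::] p1 s1.
exists (Fam X p1), (Fam X p2); split.
  by move/(Fam_inj n3 T0 HXc) => e; rewrite e eqxx in ne.
split; first exact: (Fam_adv delta n3 T0 HXs HXc gX).
split; first exact: (Fam_adv delta n3 T0 HXs HXc gX).
rewrite E; split; exact: hist_B.
Qed.
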